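(* Let $\bar k>0$ and, for each $k>\bar k$, let $(u_{1,k},u_{2,k})$ be an $L$-periodic solution of \[ \begin{cases}-u_1''=\mu_1(1-u_1)u_1-k\omega u_1u_2\\ -d u_2''=\mu_2(1-u_2)u_2-\alpha k\omega u_1u_2\end{cases} \] belonging to $O_\varepsilon$ (for a fixed $\varepsilon>0$). Let $\lambda_{1,k}$ be the periodic principal eigenvalue defined in the context. Then there exists $C\in\mathbb{R}$ such that $\lambda_{1,k}>-C$ for all $k>\bar k$.
   Context: Fix $L>0$, $\alpha>0$, $d>0$, positive $L$-periodic $\mu_1,\mu_2\in L^\infty(\mathbb{R})$ and a positive smooth $L$-periodic $\omega$. $v\in\mathscr{C}^{1,1}$ is a fixed $L$-periodic sign-changing solution of $-v''=\frac{\mu_1}{\alpha}(\alpha-v)v^+-\frac{\mu_2}{d^2}(d+v)v^-$, $X=\mathscr{C}^{0,1/2}_{L\text{-per}}$, $\eta>0$ fixed, and $O_\varepsilon=\{u\in X^2: u_1>0,\ u_2>0,\ \|\alpha u_1-du_2-v\|_{L^\infty}<\eta,\ \|u-(v^+/\alpha,v^-/d)\|_{X^2}<2\varepsilon\}$, where $z^+=\max(z,0)$, $z^-=-\min(z,0)$. $\lambda_{1,k}$ is the periodic principal eigenvalue of \[ -\begin{pmatrix}\frac{d^2}{dx^2}+\mu_1(1-2u_{1,k})-k\omega u_{2,k} & k\omega u_{1,k}\\ \alpha k\omega u_{2,k} & d\frac{d^2}{dx^2}+\mu_2(1-2u_{2,k})-\alpha k\omega u_{1,k}\end{pmatrix},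 \] i.e. the unique real $\lambda$ admitting an $L$-periodic eigenfunction $(\varphi,\psi)$ with $\varphi>0,\psi>0$ (the operator is cooperative). *)

(* Defs.v *)
From HB Require Import structures.
From mathcomp Require Import all_boot all_order all_algebra.
From mathcomp Require Import all_classical all_reals all_analysis.
Set Implicit Arguments. Unset Strict Implicit. Unset Printing Implicit Defensive.
Import Order.TTheory GRing.Theory Num.Theory.
Import numFieldNormedType.Exports.
Local Open Scope ring_scope.

Section Defs.
Variable R : realType.

Definition ppart (z : R) : R := Num.max z 0.
Definition npart (z : R) : R := Num.max (- z) 0.

Definition Lperiodic (L : R) (f : R -> R) : Prop := forall x, f (x + L) = f x.

(* essentially bounded measurable function (a representative of an L^oo class) *)
Definition Linfty (f : R -> R) : Prop :=
  measurable_fun setT f /\ exists M : R, forall x, `|f x| <= M.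

Definition smooth (f : R -> R) : Prop :=
  forall (n : nat) (x : R), derivable (iter n (fun g : R -> R => derive1 g) f) x 1.

Definition C11 (f : R -> R) : Prop :=
  (forall x, derivable f x 1) /\
  exists K : R, forall x y, `|derive1 f x - derive1 f y| <= K * `|x - y|.

(* strong (W^{2,oo}) solution of  f'' = g  a.e. : f in C^{1,1} and, for a.e. x,
   f' is differentiable at x with (f')'(x) = g x *)
Definition second_deriv_ae (f g : R -> R) : Prop :=
  C11 f /\
  {ae (@lebesgue_measure R), forall x, derivable (derive1 f) x 1 /\ derive1 (derive1 f) x = g x}.

Definition sup_norm_lt (f : R -> R) (r : R) : Prop :=
  exists c, c < r /\ forall x, `|f x| <= c.

Definition hoelder_bounds (f : R -> R) (a b : R) : Prop :=
  (forall x, `|f x| <= a) /\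
  (forall x y, `|f x - f y| <= b * Num.sqrt `|x - y|).

(* ||(f1,f2)||_{X^2} < r, with ||f||_X = ||f||_oo + [f]_{1/2} and
   ||(f1,f2)||_{X^2} = ||f1||_X + ||f2||_X *)
Definition X2_norm_lt (f1 f2 : R -> R) (r : R) : Prop :=
  exists a1 b1 a2 b2, a1 + b1 + a2 + b2 < r /\
    hoelder_bounds f1 a1 b1 /\ hoelder_bounds f2 a2 b2.

Definition inX (L : R) (f : R -> R) : Prop :=
  Lperiodic L f /\ exists a b, hoelder_bounds f a b.

Definition O_eps (L alpha d eta eps : R) (v : R -> R) (u1 u2 : R -> R) : Prop :=
  inX L u1 /\ inX L u2 /\
  (forall x, 0 < u1 x) /\ (forall x, 0 < u2 x) /\
  sup_norm_lt (fun x => alpha * u1 x - d * u2 x - v x) eta /\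
  X2_norm_lt (fun x => u1 x - ppart (v x) / alpha)
             (fun x => u2 x - npart (v x) / d) (2 * eps).

Definition is_system_solution (L alpha d k : R) (mu1 mu2 omega : R -> R)
    (u1 u2 : R -> R) : Prop :=
  Lperiodic L u1 /\ Lperiodic L u2 /\
  second_deriv_ae u1
    (fun x => - (mu1 x * (1 - u1 x) * u1 x - k * omega x * u1 x * u2 x)) /\
  second_deriv_ae u2
    (fun x => - (mu2 x * (1 - u2 x) * u2 x - alpha * k * omega x * u1 x * u2 x) / d).

(* lam is the periodic principal eigenvalue of
   - [[ d^2/dx^2 + mu1(1-2u1) - k om u2 ,  k om u1 ],
      [ alpha k om u2 , d d^2/dx^2 + mu2(1-2u2) - alpha k om u1 ]]
   i.e. lam admits an L-periodic eigenfunction (phi,psi) with phi>0, psi>0 *)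
Definition is_periodic_principal_eigenvalue (L alpha d k : R)
    (mu1 mu2 omega u1 u2 : R -> R) (lam : R) : Prop :=
  exists phi psi : R -> R,
    Lperiodic L phi /\ Lperiodic L psi /\
    (forall x, 0 < phi x) /\ (forall x, 0 < psi x) /\
    C11 phi /\ C11 psi /\
    {ae (@lebesgue_measure R), forall x,
       derivable (derive1 phi) x 1 /\ derivable (derive1 psi) x 1 /\
       - (derive1 (derive1 phi) x + (mu1 x * (1 - 2 * u1 x) - k * omega x * u2 x) * phi x
          + k * omega x * u1 x * psi x) = lam * phi x /\
       - (alpha * k * omega x * u2 x * phi x + d * derive1 (derive1 psi) x
          + (mu2 x * (1 - 2 * u2 x) - alpha * k * omega x * u1 x) * psi x)
         = lam * psi x}.

End Defs.

(* Main.v *)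
Require Import Defs.
From HB Require Import structures.
From mathcomp Require Import all_boot all_order all_algebra.
From mathcomp Require Import all_classical all_reals all_analysis.
From mathcomp Require Import ring lra measurable_realfun.
Set Implicit Arguments. Unset Strict Implicit. Unset Printing Implicit Defensive.
Import Order.TTheory GRing.Theory Num.Theory.
Import numFieldNormedType.Exports.
Local Open Scope ring_scope.

Section Helpers.
Local Open Scope classical_set_scope.
Lemma is_derive_lin (R : realType) (f g : R -> R) (x a b df dg : R) :
  is_derive x 1 f df -> is_derive x 1 g dg ->
  is_derive x 1 (fun y => a * f y + b * g y) (a * df + b * dg).
Proof.
move=> Hf Hg; exact: (is_deriveD (is_deriveZ a Hf) (is_deriveZ b Hg)).
Qed.
Lemma is_derive_derive1 (R : realType) (f : R -> R) (x : R) :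
  derivable f x 1 -> is_derive x 1 f (derive1 f x).
Proof. by move=> df; rewrite derive1E; apply: derivableP. Qed.
Lemma derive1_is (R : realType) (f : R -> R) (x df : R) :
  is_derive x 1 f df -> derivable f x 1 /\ derive1 f x = df.
Proof. by move=> H; split; [exact: ex_derive | rewrite derive1E derive_val]. Qed.
Lemma deriv_right_lb (R : realType) (h : R -> R) (s e : R) :
  derivable h s 1 -> 0 < e ->
  exists2 d, 0 < d & forall t, 0 < t -> t < d -> (derive1 h s - e) * t <= h (s + t) - h s.
Proof.
move=> hd e0.
have := hd; rewrite /derivable => /cvgrPdist_lt /(_ e e0).
rewrite derive1E /derive.
rewrite near_withinE /= => /nbhs_ballP [d d0 Hd].
exists d => // t t0 td.
have := Hd t.
set D := lim _.
have bt : ball 0 d t by rewrite /ball /= sub0r normrN gtr0_norm.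
move=> /(_ bt (lt0r_neq0 t0)).
have -> : t%:A = t by rewrite /GRing.scale /= mulr1.
rewrite (addrC t s) /GRing.scale /= => H.
have H2 : D - e < t^-1 * (h (s + t) - h s).
  move: H; rewrite ltr_norml => /andP [_ H1].
  have [D0 eD] : exists D0 : R, D = D0 by exists D.
  rewrite eD in H1 *; lra.
have -> : h (s+t) - h s = (t^-1 * (h (s + t) - h s)) * t.
  by rewrite mulrC mulrA mulfV ?mul1r // lt0r_neq0.
by rewrite ler_pM2r // ltW.
Qed.
Lemma mU_facts (R: realType) (U : set R) (e : R) : open U ->
  (@lebesgue_measure R U < e%:E)%E ->
  exists m : R -> R,
  (forall x, 0 <= m x /\ m x <= e) /\ (forall x y, x <= y -> m x <= m y) /\
  (forall s z, s < z -> `]s, z]%classic `<=` U -> m s + (z - s) <= m z).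
Proof.
move=> oU Ue.
pose m := fun x => fine (@lebesgue_measure R (U `&` `]-oo, x]%classic)); exists m.
have mU : measurable U by exact: open_measurable.
have mI x : measurable (U `&` `]-oo, x]%classic) by apply: measurableI.
have le x : (@lebesgue_measure R (U `&` `]-oo, x]%classic) <= @lebesgue_measure R U)%E.
  by apply: le_measure; [rewrite inE; exact: mI|rewrite inE|apply: subIsetl].
have fin x : (@lebesgue_measure R (U `&` `]-oo, x]%classic)) = (m x)%:E.
  rewrite /m fineK // ge0_fin_numE ?measure_ge0 //.
  by apply: (le_lt_trans (le x)); apply: (lt_trans Ue); rewrite ltry.
have sub x y : x <= y -> U `&` `]-oo, x]%classic `<=` U `&` `]-oo, y]%classic.
  move=> xy t [Ut] /= H; move: H; rewrite in_itv /= => tx; split => //.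
  by rewrite /= in_itv /= (le_trans tx).
split.
  move=> x; split; first by rewrite /m fine_ge0 // measure_ge0.
  by rewrite -lee_fin -fin; apply: ltW; apply: le_lt_trans (le x) Ue.
split.
  move=> x y xy; rewrite -lee_fin -!fin; apply: le_measure; rewrite ?inE; [exact: mI|exact: mI|].
  exact: sub xy.
move=> s z sz sU.
rewrite -lee_fin EFinD -!fin.
have msz : measurable (`]s, z]%classic : set R) by [].
have -> : ((z - s)%:E = @lebesgue_measure R `]s, z]%classic)%E.
  by rewrite lebesgue_measure_itv /= lte_fin sz EFinB.
rewrite -measureU //; last first.
  rewrite -subset0 => t [[_ /=]]; rewrite !in_itv /= => ts /andP [st _].
  by move: (lt_le_trans st ts); rewrite ltxx.
exact: mI.
apply: le_measure; rewrite ?inE; [apply: measurableU; [exact: mI|exact: msz]|exact: mI|].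
move=> t [[Ut /= H]|/= H]; move: H; rewrite in_itv /=.
  by move=> ts; split => //=; rewrite in_itv /= (le_trans ts) // ltW.
move=> /andP [st tz]; split; first by apply: sU; rewrite /= in_itv /= st tz.
by rewrite /= in_itv /= tz.
Qed.

Lemma lip_mono (R : realType) (h : R -> R) (K : R) (N : set R) :
  0 <= K -> (forall x y, `|h x - h y| <= K * `|x - y|) ->
  measurable N -> @lebesgue_measure R N = 0%E ->
  (forall x, ~ N x -> derivable h x 1 /\ 0 <= derive1 h x) ->
  forall a b, a <= b -> h a <= h b.
Proof.
move=> K0 hL mN N0 hd a b ab.
suff H : forall e : R, 0 < e -> h a <= h b + e * (b - a + K).
  apply/ler_addgt0Pr => e' e'0.
  have c0 : 0 < b - a + K + 1 by lra.
  apply: (le_trans (H (e' / (b - a + K + 1)) (divr_gt0 e'0 c0))).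
  rewrite lerD2l -{2}(divfK (lt0r_neq0 c0) e') ler_wpM2l //; last lra.
  by rewrite ltW // divr_gt0.
move=> e e0.
have Nfin : (@lebesgue_measure R N < +oo)%E by rewrite N0 ltry.
have [U [oU NU UNe]] := lebesgue_regularity_outer mN Nfin e0.
have mU : measurable U by exact: open_measurable.
have Ue : (@lebesgue_measure R U < e%:E)%E.
  rewrite -(setDUK NU).
  apply: (le_lt_trans (measureU2 _ _ _)); [exact: mN|apply: measurableD; [exact: mU|exact: mN]|].
  by rewrite (_ : _ N = 0%E) ?add0e //.
have [m [mb [mmono madd]]] := mU_facts oU Ue.
pose P y := - (e * (y - a)) - K * m y <= h y - h a.
pose S := [set x | a <= x <= b /\ forall y, a <= y <= x -> P y].
have Sa : S a.
  split; first by rewrite lexx ab.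
  move=> y /andP [ay ya]; have -> : y = a by apply/le_anti; rewrite ya ay.
  rewrite /P subrr mulr0 oppr0 sub0r subrr oppr_le0.
  by rewrite mulr_ge0 // (mb a).1.
have hsS : has_sup S.
  split; first by exists a.
  by exists b => x [/andP [_ xb] _].
pose s := sup S.
have as_ : a <= s by exact: sup_upper_bound hsS _ Sa.
have sb : s <= b.
  by apply: ge_sup; [exists a | move=> x [/andP [_ xb] _]].
have below : forall y, a <= y -> y < s -> P y.
  move=> y ay ys.
  have sy0 : 0 < s - y by rewrite subr_gt0.
  have [x [_ Hx] yx] := sup_adherent sy0 hsS.
  apply: Hx; rewrite ay /=; apply: ltW; move: yx; rewrite /s; lra.
have Ps : P s.
  have [as'|] := eqVneq a s; first by rewrite -as'; apply: Sa.2; rewrite lexx.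
  move=> nas; have lt_as : a < s by rewrite lt_neqAle nas as_.
  apply/ler_addgt0Pr => dl dl0.
  have K1 : 0 < K + 1 by lra.
  pose r := Num.min (dl / (K + 1)) (s - a).
  have r0 : 0 < r by rewrite lt_min divr_gt0 // subr_gt0 lt_as.
  have r1 : r <= dl / (K + 1) by rewrite ge_min lexx.
  have r2 : r <= s - a by rewrite ge_min lexx orbT.
  have Py := below (s - r) ltac:(lra) ltac:(lra).
  move: Py; rewrite /P => Py.
  have Lip := hL (s - r) s.
  have e1 : `|s - r - s| = r by rewrite addrAC subrr add0r normrN gtr0_norm.
  rewrite e1 in Lip.
  have Kr : K * r <= dl.
    have : (K + 1) * r <= dl.
      by rewrite -ler_pdivlMl // mulrC.
    have : 0 <= r by lra.
    nra.
  have mm : K * m (s - r) <= K * m s by rewrite ler_wpM2l // mmono //; lra.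
  have em : e * (s - r - a) <= e * (s - a) by rewrite ler_wpM2l //; lra.
  move: Lip; rewrite ler_norml => /andP [_ Lip1].
  lra.
have key : forall r, 0 < r -> r <= b - s -> (forall z, s < z -> z <= s + r -> P z) -> False.
  move=> r r0 rb Hz.
  have Sy : S (s + r).
    split; first by apply/andP; split; lra.
    move=> y /andP [ay ysr].
    have [ys|sy|->] := ltgtP y s; first exact: below.
      exact: Hz.
    exact: Ps.
  have := sup_upper_bound hsS Sy; rewrite -/s; lra.
have sEb : s = b.
  apply/eqP; rewrite eq_le sb /= leNgt; apply/negP => sb'.
  case: (pselect (N s)) => Ns.
  - have := oU s (NU s Ns); move/nbhs_ballP => [d d0 sdU].
    pose r := Num.min (d / 2) (b - s).
    have r0 : 0 < r by rewrite lt_min divr_gt0 // subr_gt0 sb'.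
    have r1 : r <= d / 2 by rewrite ge_min lexx.
    have r2 : r <= b - s by rewrite ge_min lexx orbT.
    apply: (key r r0 r2) => z sz zsr.
    have sU : `]s, z]%classic `<=` U.
      move=> w /= H; move: H; rewrite in_itv /= => /andP [sw wz].
      apply: sdU; rewrite /ball /= ltr_distlC; apply/andP; split; lra.
    have ma := madd s z sz sU.
    have Lip := hL s z.
    rewrite (ltr0_norm (_ : s - z < 0)) in Lip; last lra.
    move: Lip; rewrite ler_norml => /andP [_ Lip1].
    have mm : K * (m s + (z - s)) <= K * m z by rewrite ler_wpM2l.
    have em : e * (s - a) <= e * (z - a) by rewrite ler_wpM2l //; lra.
    move: Ps; rewrite /P => Ps'; rewrite /P.
    lra.
  - have [ds hs0] := hd s Ns.
    have [d d0 Hd] := deriv_right_lb ds e0.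
    pose r := Num.min (d / 2) (b - s).
    have r0 : 0 < r by rewrite lt_min divr_gt0 // subr_gt0 sb'.
    have r1 : r <= d / 2 by rewrite ge_min lexx.
    have r2 : r <= b - s by rewrite ge_min lexx orbT.
    apply: (key r r0 r2) => z sz zsr.
    have := Hd (z - s) ltac:(lra) ltac:(lra).
    rewrite (_ : s + (z - s) = z); last by rewrite addrC subrK.
    move=> H1.
    have H2 : 0 <= derive1 h s * (z - s) by rewrite mulr_ge0 //; lra.
    have mm : K * m s <= K * m z by rewrite ler_wpM2l // mmono //; lra.
    move: Ps; rewrite /P => Ps'; rewrite /P.
    nra.
move: Ps; rewrite /P sEb => Pb.
have : K * m b <= K * e by rewrite ler_wpM2l // (mb b).2.
lra.
Qed.

Lemma gcont_h (R: realType) (g : R -> R) (a b : R) :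
  (forall y, derivable g y 1) -> {within `[a, b], continuous g}.
Proof. by move=> dg; apply: derivable_within_continuous => y _; exact: dg. Qed.
End Helpers.

Theorem lemma3p8 (R : realType) (L alpha d eta eps kbar : R)
    (mu1 mu2 omega v : R -> R)
    (u1 u2 : R -> R -> R) (lam : R -> R) :
  0 < L -> 0 < alpha -> 0 < d -> 0 < eta -> 0 < eps -> 0 < kbar ->
  (* standing assumptions on mu1, mu2, omega *)
  Lperiodic L mu1 -> Lperiodic L mu2 -> Linfty mu1 -> Linfty mu2 ->
  (forall x, 0 < mu1 x) -> (forall x, 0 < mu2 x) ->
  Lperiodic L omega -> smooth omega -> (forall x, 0 < omega x) ->
  (* v : L-periodic sign-changing C^{1,1} solution of the limit problem *)
  Lperiodic L v -> C11 v -> (exists x, 0 < v x) -> (exists x, v x < 0) ->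
  second_deriv_ae v (fun x => - (mu1 x / alpha * (alpha - v x) * ppart (v x)
                                 - mu2 x / (d ^+ 2) * (d + v x) * npart (v x))) ->
  (* for each k > kbar, (u1 k, u2 k) is an L-periodic solution in O_eps *)
  (forall k, kbar < k ->
     is_system_solution L alpha d k mu1 mu2 omega (u1 k) (u2 k) /\
     O_eps L alpha d eta eps v (u1 k) (u2 k)) ->
  (* lam k is the periodic principal eigenvalue lambda_{1,k} *)
  (forall k, kbar < k ->
     is_periodic_principal_eigenvalue L alpha d k mu1 mu2 omega (u1 k) (u2 k) (lam k)) ->
  exists C : R, forall k, kbar < k -> - C < lam k.
Proof.
move=> L0 al0 d0 eta0 eps0 kb0 pm1 pm2 [_ [M1 HM1]] [_ [M2 HM2]] mu1p mu2p _ _ omp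
  _ _ _ _ _ Hsol Heig.
have M10 : 0 <= M1 := le_trans (normr_ge0 _) (HM1 0).
have M20 : 0 <= M2 := le_trans (normr_ge0 _) (HM2 0).
exists (M1 + M2 + 1) => k kk.
rewrite ltNge; apply/negP => lamle.
have [_ [_ [pu1 [pu2 _]]]] := (Hsol k kk).2.
have [phi [psi [pphi [ppsi [phip [psip [[dphi [Kf HKf]] [[dpsi [Kg HKg]] Hae]]]]]]]] := Heig k kk.
have [N [mN N0 NP]] := Hae.
pose h := fun y => alpha * derive1 phi y + d * derive1 psi y.
pose g := fun y => alpha * phi y + d * psi y.
have Dg : forall y : R, is_derive y (1:R) g (h y) := fun y =>
  is_derive_lin alpha d (is_derive_derive1 (dphi y)) (is_derive_derive1 (dpsi y)).
have Kf0 : 0 <= Kf.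
  have := HKf 1 0; rewrite subr0 normr1 mulr1; exact: le_trans (normr_ge0 _).
have Kg0 : 0 <= Kg.
  have := HKg 1 0; rewrite subr0 normr1 mulr1; exact: le_trans (normr_ge0 _).
have K0 : 0 <= alpha * Kf + d * Kg by rewrite addr_ge0 // mulr_ge0 // ltW.
have hL : forall x y, `|h x - h y| <= (alpha * Kf + d * Kg) * `|x - y|.
  move=> x y.
  have -> : h x - h y = alpha * (derive1 phi x - derive1 phi y)
                        + d * (derive1 psi x - derive1 psi y) by rewrite /h; ring.
  apply: (le_trans (ler_normD _ _)); rewrite !normrM (gtr0_norm al0) (gtr0_norm d0).
  have h1 := ler_wpM2l (ltW al0) (HKf x y).
  have h2 := ler_wpM2l (ltW d0) (HKg x y).
  lra.
have hpos : forall x, ~ N x -> derivable h x 1 /\ 0 < derive1 h x.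
  move=> x Nx.
  have := fun nP => Nx (NP x nP); move/contrapT => [Dp [Dq [e1 e2]]].
  have Dh := is_derive_lin alpha d (is_derive_derive1 Dp) (is_derive_derive1 Dq).
  have [dh ->] := derive1_is Dh.
  split => //.
  set p2 := derive1 (derive1 phi) x in e1 *.
  set q2 := derive1 (derive1 psi) x in e2 *.
  set l := lam k in lamle e1 e2 *.
  have E : alpha * p2 + d * q2 = - (l * (alpha * phi x + psi x))
      - alpha * (mu1 x * (1 - 2 * u1 k x)) * phi x - mu2 x * (1 - 2 * u2 k x) * psi x.
    have e1' : p2 = - (l * phi x) - (mu1 x * (1 - 2 * u1 k x) - k * omega x * u2 k x) * phi x
        - k * omega x * u1 k x * psi x by rewrite -e1; ring.
    have e2' : d * q2 = - (l * psi x) - alpha * k * omega x * u2 k x * phi x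
        - (mu2 x * (1 - 2 * u2 k x) - alpha * k * omega x * u1 k x) * psi x
      by rewrite -e2; ring.
    rewrite e2' e1'; ring.
  rewrite E.
  have m1 : mu1 x <= M1 + M2 by have := le_trans (ler_norm _) (HM1 x); lra.
  have m2 : mu2 x <= M1 + M2 by have := le_trans (ler_norm _) (HM2 x); lra.
  have t1 : mu1 x * (1 - 2 * u1 k x) <= M1 + M2.
    have := mulr_gt0 (mu1p x) (pu1 x); lra.
  have t2 : mu2 x * (1 - 2 * u2 k x) <= M1 + M2.
    have := mulr_gt0 (mu2p x) (pu2 x); lra.
  have ap : 0 < alpha * phi x by rewrite mulr_gt0.
  have s1 := ler_wpM2r (ltW ap) t1.
  have s2 := ler_wpM2r (ltW (psip x)) t2.
  have S0 : 0 < alpha * phi x + psi x by rewrite addr_gt0.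
  have s3 : (M1 + M2 + 1) * (alpha * phi x + psi x) <= - l * (alpha * phi x + psi x).
    apply: ler_wpM2r; [exact: ltW S0|lra].
  lra.
have mono := lip_mono K0 hL mN N0 (fun x Nx => let: conj a b := hpos x Nx in conj a (ltW b)).
have gper y : g (y + L) = g y by rewrite /g pphi ppsi.
have dg : forall y, derivable g y 1 by move=> y; have [] := Dg y.
have gcont (a0 b0 : R) := @gcont_h R g a0 b0 dg.
have [c c0L Hc] := MVT L0 (fun y _ => Dg y) (gcont 0 L).
have LL : L < L + L by lra.
have [c' c'L Hc'] := MVT LL (fun y _ => Dg y) (gcont L (L + L)).
have hc : h c = 0.
  move: Hc; rewrite -{1}(add0r L) gper subrr subr0 => /esym /eqP.
  by rewrite mulf_eq0 (gt_eqF L0) orbF => /eqP.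
have hc' : h c' = 0.
  move: Hc'; rewrite gper subrr (_ : L + L - L = L); last by ring.
  move=> /esym /eqP.
  by rewrite mulf_eq0 (gt_eqF L0) orbF => /eqP.
move: c0L c'L; rewrite !in_itv /= => /andP [c0 cL] /andP [Lc' c'LL].
have cc' : c < c' by lra.
have hz : forall y, c <= y -> y <= c' -> h y = 0.
  move=> y cy yc'; apply/le_anti/andP; split.
    by rewrite -hc'; exact: mono.
  by rewrite -hc; exact: mono.
have [x /andP [cx xc'] Nx] : exists2 x, c < x < c' & ~ N x.
  apply: contrapT => H.
  have sub : (`]c, c'[ `<=` N)%classic.
    move=> x /= Hx; move: Hx; rewrite in_itv /= => Hx.
    apply: contrapT => Nx; apply: H; exists x => //.
  have H1 : (@lebesgue_measure R `]c, c'[%classic <= @lebesgue_measure R N)%E.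
    by apply: le_measure; rewrite ?inE.
  move: H1; rewrite N0 lebesgue_measure_itv /= lte_fin cc' -EFinB lee_fin.
  move=> H'; have : 0 < c' - c by rewrite subr_gt0.
  by rewrite ltNge H'.
have [dh hp] := hpos x Nx.
move: hp; rewrite derive1E.
have -> : derive h x 1 = derive (cst 0 : R -> R) x 1.
  apply: near_eq_derive.
  apply/nbhs_ballP; exists (Num.min (x - c) (c' - x)) => /=.
    by rewrite lt_min !subr_gt0 cx xc'.
  move=> y; rewrite /ball /= lt_min !ltr_distlC => /andP [/andP [H1 H2] /andP [H3 H4]].
  rewrite hz //; lra.
by rewrite derive_cst ltxx.
Qed.
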